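(* For all integers $N\ge2$ and all $x\neq y$, $$\sum_{2\le a+b\le N}s(N,a+b)\,x^ay^b=\frac{y\,x(x-1)\cdots(x-N+1)-x\,y(y-1)\cdots(y-N+1)}{x-y},$$ and for $M=0,1,\dots,N-1$, $$\sum_{2\le a+b\le N}s(N,a+b)\,M^{a+b-1}=(-1)^{N-M-1}M!\,(N-M-1)!,$$ where both sums run over all integers $a,b\ge1$ with $2\le a+b\le N$.
   Context: $s(n,k)$ denote the Stirling numbers of the first kind, defined by $\sum_{k=0}^n s(n,k)x^k=x(x-1)\cdots(x-n+1)$. *)

(* Defs.v *)
From HB Require Import structures.
From mathcomp Require Import all_boot all_order all_algebra.
Set Implicit Arguments. Unset Strict Implicit. Unset Printing Implicit Defensive.
Import Order.TTheory GRing.Theory Num.Theory.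
Local Open Scope ring_scope.

Definition stirling1 (n k : nat) : int :=
  (\prod_(i < n) ('X - (i%:Z)%:P))`_k.

(* Main.v *)
Require Import Defs.
From HB Require Import structures.
From mathcomp Require Import all_boot all_order all_algebra zify ring.
Import Order.TTheory GRing.Theory Num.Theory.
Local Open Scope ring_scope.

Definition spoly N : {poly int} := \prod_(i < N) ('X - (i%:Z)%:P).

Lemma size_pX (R : nzRingType) N (F : 'I_N -> R) : size (\prod_(i < N) ('X - (F i)%:P)) = N.+1.
Proof. rewrite size_prod_XsubC; congr _.+1; by rewrite -[RHS](card_ord N) cardE /enum_mem size_filter count_predT. Qed.

Lemma evalP (R : comNzRingType) N (x : R) :
  \prod_(i < N) (x - i%:R) = \sum_(k < N.+1) (stirling1 N k)%:~R * x ^+ k.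
Proof.
have -> : \prod_(i < N) (x - i%:R) = (map_poly intr (spoly N)).[x].
  rewrite /spoly map_prod_XsubC horner_prod; apply: eq_bigr => i _.
  by rewrite hornerXsubC.
rewrite (horner_coef_wide _ (n := N.+1)); last by rewrite /spoly map_prod_XsubC size_pX.
by apply: eq_bigr => k _; rewrite coef_map.
Qed.

Lemma stir0 N : (0 < N)%N -> stirling1 N 0 = 0.
Proof.
case: N => // N _; rewrite /stirling1 -horner_coef0 horner_prod big_ord_recl.
by rewrite hornerXsubC subrr mul0r.
Qed.

Lemma reidx (R : nmodType) N (G : nat -> nat -> R) :
 \sum_(a < N.+1) \sum_(b < N.+1 | [&& (1 <= a)%N, (1 <= b)%N & (2 <= a + b <= N)%N]) G a b
 = \sum_(k < N.+1) \sum_(a < N.+1 | (1 <= a < k)%N) G a (k - a)%N.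
Proof.
rewrite pair_big_dep [RHS]pair_big_dep /=.
rewrite (reindex_onto (fun p : 'I_N.+1 * 'I_N.+1 => (p.2, inord (p.1 - p.2)))
                      (fun p : 'I_N.+1 * 'I_N.+1 => (inord (p.1 + p.2), p.1))) /=.
  apply: eq_big => [[k a]|[k a]] /=.
    have hk := ltn_ord k.
    rewrite inordK; last lia.
    case: (leqP a k) => hak.
      rewrite (subnKC hak) inord_val eqxx andbT.
      apply/idP/idP; [move/and4P => [*]; lia | move/andP => [*]; apply/and4P; split; lia].
    rewrite (_ : (k - a = 0)%N); last lia.
    rewrite andbF /=; apply/esym/negbTE; apply/negP => /andP [*]; lia.
  move=> /andP [_ _]; rewrite inordK //; have := ltn_ord k; lia.
move=> [a b] /= /and4P [h1 h2 h3 h4].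
have e : (inord (a + b) : 'I_N.+1) = (a + b)%N :> nat.
  by rewrite inordK //; lia.
by rewrite e addKn inord_val.
Qed.

Lemma geo0 (R : comNzRingType) k (x y : R) : (0 < k)%N ->
  (x - y) * \sum_(0 <= a < k) (if (1 <= a)%N then x ^+ a * y ^+ (k - a) else 0)
  = y * x ^+ k - x * y ^+ k.
Proof.
elim: k => // k IH _.
case: k IH => [|k] IH.
  by rewrite big_nat1 /= mulr0 expr1 expr1 mulrC subrr.
rewrite big_nat_recr //=.
have -> : \sum_(0 <= a < k.+1) (if (1 <= a)%N then x ^+ a * y ^+ (k.+2 - a) else 0)
   = y * \sum_(0 <= a < k.+1) (if (1 <= a)%N then x ^+ a * y ^+ (k.+1 - a) else 0).
  rewrite big_distrr /=; apply: eq_big_nat => a /andP [_ ha].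
  case: ifP => _; last by rewrite mulr0.
  by rewrite (subSn (ltnW ha)) exprS mulrCA.
rewrite mulrDr mulrCA IH // subSnn expr1.
rewrite !(exprS _ k.+1); ring.
Qed.

Lemma geo (R : comNzRingType) N k (x y : R) : (k <= N)%N -> (0 < k)%N ->
 (x - y) * \sum_(a < N.+1 | (1 <= a < k)%N) x ^+ a * y ^+ (k - a)
  = y * x ^+ k - x * y ^+ k.
Proof.
move=> hkN hk; rewrite -(big_mkord (fun a => (1 <= a < k)%N) (fun a => x ^+ a * y ^+ (k - a))).
rewrite (big_cat_nat _ (n := k)) //=; last lia.
rewrite [X in _ * (_ + X)]big_nat_cond [X in _ * (_ + X)]big1 ?addr0; last by move=> i /andP [h1 h2]; exfalso; lia.
rewrite -geo0 //; congr (_ * _).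
rewrite big_mkcond /=; apply: eq_big_nat => a /andP [_ ha].
by rewrite ha andbT.
Qed.


Lemma cnt (R : nmodType) N k (c : R) : (k <= N)%N ->
  \sum_(a < N.+1 | (1 <= a < k)%N) c = c *+ k.-1.
Proof.
move=> hkN; rewrite -(big_mkord (fun a => (1 <= a < k)%N) (fun _ => c)).
rewrite (big_cat_nat _ (n := k)) //=; last lia.
rewrite [X in _ + X]big_nat_cond [X in _ + X]big1 ?addr0; last by move=> i /andP [h1 h2]; exfalso; lia.
case: k hkN => [|k] hkN; first by rewrite big_geq.
rewrite (big_cat_nat _ (n := 1)) //= [X in X + _]big_mkcond big_nat1 /= add0r.
transitivity (\sum_(1 <= i < k.+1) c); last by rewrite sumr_const_nat subn1.
by rewrite [RHS]big_nat_cond; apply: eq_bigl => i; rewrite andbT.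
Qed.

Lemma factZ n : \prod_(0 <= i < n) ((i.+1)%:Z) = (n`!)%:Z.
Proof.
elim: n => [|n IH]; first by rewrite big_geq.
by rewrite big_nat_recr //= IH factS PoszM mulrC.
Qed.

Lemma factZneg n : \prod_(0 <= i < n) (- (i.+1)%:Z) = (-1) ^+ n * (n`!)%:Z.
Proof.
elim: n => [|n IH]; first by rewrite big_geq.
rewrite big_nat_recr //= IH factS PoszM exprS; ring.
Qed.


Lemma prodM N M (hM : (M < N)%N) :
  \prod_(i < N | i != Ordinal hM) ((M%:Z) - (i%:Z))
  = (-1) ^+ (N - M - 1) * (M`!)%:Z * ((N - M - 1)`!)%:Z.
Proof.
rewrite (eq_bigl (fun i : 'I_N => (i : nat) != M)) //.
rewrite -(big_mkord (fun i => i != M) (fun i => M%:Z - i%:Z)).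
rewrite (big_cat_nat _ (n := M)) //=; last exact: ltnW.
rewrite [X in _ * X](big_cat_nat _ (n := M.+1)) //=.
rewrite [X in X * _]big_mkcond [X in _ * (X * _)]big_mkcond big_nat1 eqxx mul1r /=.
have -> : \prod_(0 <= i < M) (if i != M then M%:Z - i%:Z else 1) = (M`!)%:Z.
  rewrite -factZ big_nat_rev /=; apply: eq_big_nat => i /andP [_ hi].
  rewrite ifT; last lia.
  lia.
rewrite big_mkcond.
have -> : \prod_(M.+1 <= i < N) (if i != M then M%:Z - i%:Z else 1)
   = \prod_(0 <= i < N - M.+1) (- (i.+1)%:Z).
  rewrite -{1}[M.+1]add0n big_addn; apply: eq_big_nat => i /andP [_ hi].
  rewrite ifT; last lia.
  lia.
rewrite factZneg subnS -subn1 subnAC; ring.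
Qed.

Theorem lemma2p3 (R : fieldType) (N : nat) (hN : (2 <= N)%N) :
  (forall x y : R, x != y ->
     \sum_(a < N.+1) \sum_(b < N.+1 | [&& (1 <= a)%N, (1 <= b)%N & (2 <= a + b <= N)%N])
        (stirling1 N (a + b))%:~R * x ^+ a * y ^+ b
     = (y * \prod_(i < N) (x - i%:R) - x * \prod_(i < N) (y - i%:R)) / (x - y))
  /\
  (forall M : nat, (1 <= M)%N -> (M <= N - 1)%N ->
     \sum_(a < N.+1) \sum_(b < N.+1 | [&& (1 <= a)%N, (1 <= b)%N & (2 <= a + b <= N)%N])
        stirling1 N (a + b) * (M%:Z) ^+ (a + b - 1)
     = (-1) ^+ (N - M - 1) * (M`!)%:Z * ((N - M - 1)`!)%:Z).
Proof.
split.
  move=> x y hxy.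
  rewrite (@reidx _ N (fun a b : nat => (stirling1 N (a+b))%:~R * x^+a * y^+b)).
  have hxy' : x - y != 0 by rewrite subr_eq0.
  apply/(mulIf hxy'); rewrite divfK // !evalP !big_distrr -sumrB big_distrl /=.
  apply: eq_bigr => k _.
  have hk := ltn_ord k.
  case: (posnP k) => [->|kpos].
    rewrite stir0 ?(leq_trans _ hN) // big_pred0 ?mul0r ?mulr0z ?mul0r ?mulr0 ?subrr //.
    by move=> a; rewrite ltn0 andbF.
  have -> : y * ((stirling1 N k)%:~R * x ^+ k) - x * ((stirling1 N k)%:~R * y ^+ k)
     = (stirling1 N k)%:~R * ((x - y) * \sum_(a < N.+1 | (1 <= a < k)%N) x ^+ a * y ^+ (k - a)).
    rewrite geo //; ring.
  rewrite big_distrr /= big_distrr /= mulr_suml; apply: eq_bigr => a /andP [_ ha].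
  rewrite (subnKC (ltnW ha)); ring.
move=> M hM1 hMN.
have hM : (M < N)%N by lia.
rewrite (@reidx _ N (fun a b : nat => stirling1 N (a+b) * (M%:Z)^+(a+b-1))).
have step : forall k : 'I_N.+1,
  \sum_(a < N.+1 | (1 <= a < k)%N) stirling1 N (a + (k - a)) * (M%:Z) ^+ (a + (k - a) - 1)
  = (stirling1 N k * (M%:Z) ^+ k.-1) *+ k.-1.
  move=> k; have hk := ltn_ord k; rewrite -(@cnt _ N); last lia.
  by apply: eq_bigr => a /andP [_ ha]; rewrite subnKC ?subn1 // ltnW.
rewrite (eq_bigr _ (fun k _ => step k)) /=.
set p := spoly N.
have sE : forall k, stirling1 N k = p`_k by [].
have P0 : \sum_(k < N.+1) stirling1 N k * (M%:Z) ^+ k = 0.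
  transitivity (\sum_(k < N.+1) (stirling1 N k)%:~R * (M%:Z) ^+ k).
    by apply: eq_bigr => k _; rewrite intz.
  by rewrite -evalP (bigD1 (Ordinal hM)) //= natz subrr mul0r.
have D1 : p^`().[M%:Z] = \sum_(i < N.+1) (p`_i.+1 *+ i.+1) * (M%:Z) ^+ i.
  rewrite (horner_coef_wide _ (n := N.+1)).
    by apply: eq_bigr => i _; rewrite coef_deriv.
  rewrite -(@size_pX _ N (fun i : 'I_N => (i%:Z))); apply: ltnW; apply: lt_size_deriv.
  by rewrite -size_poly_eq0 size_pX.
have D2 : p^`().[M%:Z] = (-1) ^+ (N - M - 1) * (M`!)%:Z * ((N - M - 1)`!)%:Z.
  rewrite /p /spoly (bigD1 (Ordinal hM)) //= derivM derivXsubC mul1r hornerD hornerM.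
  rewrite hornerXsubC subrr mul0r addr0 horner_prod -prodM; apply: eq_bigr => i _.
  by rewrite hornerXsubC.
rewrite -D2 D1 [RHS]big_ord_recr /= (nth_default 0 (_ : size p <= N.+1)%N) ?size_pX // mul0rn mul0r addr0.
rewrite [LHS]big_ord_recl /= mulr0n add0r.
have Q0 : \sum_(i < N) stirling1 N i.+1 * (M%:Z) ^+ i = 0.
  have hM0 : (M%:Z) != 0 by rewrite eqz_nat -lt0n.
  apply/(mulIf hM0); rewrite mul0r big_distrl /=.
  move: P0; rewrite big_ord_recl /= stir0 ?mul0r ?add0r; last lia.
  move=> e; rewrite -[RHS]e; apply: eq_bigr => i _; rewrite exprSr mulrA //.
transitivity (\sum_(i < N) (stirling1 N i.+1 * (M%:Z) ^+ i *+ i + stirling1 N i.+1 * (M%:Z) ^+ i)).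
  by rewrite big_split /= Q0 addr0.
by apply: eq_bigr => i _; rewrite -mulrSr -mulrnAl.
Qed.
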